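(* For every dimension $d$ and integers $t\ge 2$, $k\ge 1$, $h\ge 1$ there exists an integer $m=m(t,k,h)$ (depending only on $t,k,h$) with the following property: for every finite family $\mathcal{H}$ of $h$ halfspaces in $\mathbb{R}^d$, the (unordered) $t$-tuples of every finite set of points $S\subset\mathbb{R}^d$ can be $k$-colored such that every $\mathcal{H}$-region that contains at least $m$ points of $S$ contains a $t$-tuple of points of $S$ of each of the $k$ colors.
   Context: Given a finite family of halfspaces $\mathcal{H}=\{H_1,\dots,H_h\}$ in $\mathbb{R}^d$, a region $R$ is an $\mathcal{H}$-region if it is the intersection of finitely many halfspaces, each of which is a translate of one of the halfspaces in $\mathcal{H}$. A $t$-tuple of points of $S$ is a $t$-element subset of $S$; a region contains a $t$-tuple if it contains all its points. *)

(* Defs.v *)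
From HB Require Import structures.
From mathcomp Require Import all_boot all_order all_algebra.
From mathcomp Require Import finmap.
From mathcomp Require Import reals.
Set Implicit Arguments. Unset Strict Implicit. Unset Printing Implicit Defensive.
Import Order.TTheory GRing.Theory Num.Theory.
Local Open Scope ring_scope.
Local Open Scope fset_scope.

Definition dotp (R : realType) (d : nat) (a x : 'rV[R]_d) : R :=
  \sum_(i < d) a ord0 i * x ord0 i.

Record halfspace (R : realType) (d : nat) := Halfspace {
  hs_normal : 'rV[R]_d;
  hs_offset : R;
  hs_open : bool;
  hs_normal_neq0 : hs_normal != 0 }.

Definition in_halfspace (R : realType) (d : nat) (H : halfspace R d) (x : 'rV[R]_d) : bool :=
  if hs_open H then dotp (hs_normal H) x < hs_offset H
  else dotp (hs_normal H) x <= hs_offset H.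

Definition in_translate (R : realType) (d : nat) (H : halfspace R d) (v x : 'rV[R]_d) : bool :=
  in_halfspace H (x - v).

(* An H-region for the family Hs : 'I_h -> halfspace, described by a finite list of
   (index, translation vector) pairs: the intersection of the translates
   Hs i + v over the list. *)
Definition in_region (R : realType) (d h : nat) (Hs : 'I_h -> halfspace R d)
  (r : seq ('I_h * 'rV[R]_d)) (x : 'rV[R]_d) : bool :=
  all (fun p => in_translate (Hs p.1) p.2 x) r.

Definition is_tuple_of (R : realType) (d t : nat) (S T : {fset 'rV[R]_d}) : bool :=
  (T `<=` S) && (#|` T| == t)%N.

(* Main.v *)
Require Import Defs.
From HB Require Import structures.
From mathcomp Require Import all_boot all_order all_algebra.
From mathcomp Require Import finmap.
From mathcomp Require Import reals.
From mathcomp Require Import zify.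
From Stdlib Require Import Lia.
Import Order.TTheory GRing.Theory Num.Theory.
Local Open Scope ring_scope.
Local Open Scope fset_scope.

Set Implicit Arguments. Unset Strict Implicit.

Lemma pairwise_rev (T : Type) (r : rel T) (s : seq T) :
  pairwise r (rev s) = pairwise (fun x y => r y x) s.
Proof.
elim: s => //= x s IH; rewrite rev_cons pairwise_rcons IH all_rev; congr (_ && _).
Qed.

Lemma es_lemma (T : eqType) (r : rel T) (r_tot : forall x y, r x y || r y x) n :
  forall p q (s : seq T), (p + q = n)%N -> (2 ^ (p + q) <= size s)%N ->
  exists s', subseq s' s /\
    (((p <= size s')%N /\ pairwise r s') \/
     ((q <= size s')%N /\ pairwise (fun x y => r y x) s')).
Proof.
elim: n => [|n IH] p q s pq hs.
  by exists [::]; split; [exact: sub0seq| left; move: pq => /eqP; rewrite addn_eq0 => /andP[/eqP-> _]].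
case: p pq hs => [|p] pq hs.
  by exists [::]; split; [exact: sub0seq| left].
case: q pq hs => [|q] pq hs.
  by exists [::]; split; [exact: sub0seq| right].
case: s hs => [|x s0] hs; first by move: hs; rewrite /= leqn0 expn_eq0.
set A := filter (r x) s0; set B := filter (predC (r x)) s0.
have sAB : (size A + size B = size s0)%N by rewrite !size_filter count_predC.
have hs0 : (2 ^ n + 2 ^ n <= (size s0).+1)%N.
  by move: hs; rewrite pq expnS /=; lia.
have [hA|hB] : (2 ^ n <= size A)%N \/ (2 ^ n <= size B)%N.
  lia.
- have e1 : (p + q.+1 = n)%N by lia.
  have hA' : (2 ^ (p + q.+1) <= size A)%N by rewrite e1.
  have [s' [ss' [[hp hr]|[hq hr]]]] := IH p q.+1 A e1 hA'.
  + exists (x :: s'); split; first by rewrite /= eqxx; apply: subseq_trans ss' (filter_subseq _ _).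
    left; split=> //=; rewrite hr andbT; apply/allP => y /(mem_subseq ss').
    by rewrite mem_filter => /andP[].
  + exists s'; split=> //; last by right.
    by apply: subseq_trans (subseq_cons _ _); apply: subseq_trans ss' (filter_subseq _ _).
- have e1 : (p.+1 + q = n)%N by lia.
  have hB' : (2 ^ (p.+1 + q) <= size B)%N by rewrite e1.
  have [s' [ss' [[hp hr]|[hq hr]]]] := IH p.+1 q B e1 hB'.
  + exists s'; split=> //; last by left.
    by apply: subseq_trans (subseq_cons _ _); apply: subseq_trans ss' (filter_subseq _ _).
  + exists (x :: s'); split; first by rewrite /= eqxx; apply: subseq_trans ss' (filter_subseq _ _).
    right; split=> //=; rewrite hr andbT; apply/allP => y /(mem_subseq ss').
    rewrite mem_filter => /andP[/= nxy _]; by move: (r_tot x y); rewrite (negbTE nxy).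
Qed.

Lemma es_all (T : eqType) (h : nat) (r : 'I_h -> rel T)
  (tot : forall i x y, r i x y || r i y x) (J : seq 'I_h) N (s : seq T) :
  (iter (size J) (fun M => 2 ^ (M + M)) N <= size s)%N ->
  exists s', subseq s' s /\ (N <= size s')%N /\
    all (fun i => pairwise (r i) s' || pairwise (fun x y => r i y x) s') J.
Proof.
elim: J s => [|i J IH] s hs.
  by exists s; split; [exact: subseq_refl| split].
set M := iter (size J) (fun M => 2 ^ (M + M))%N N.
have [s1 [ss1 hs1]] := es_lemma (tot i) (erefl (M + M)%N) hs.
have [hM1 hmono] : (M <= size s1)%N /\
   (pairwise (r i) s1 || pairwise (fun x y => r i y x) s1).
  by case: hs1 => -[-> ->]; rewrite ?orbT.
have [s2 [ss2 [hN hall]]] := IH s1 hM1.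
exists s2; split; first exact: subseq_trans ss2 ss1.
split=> //=; rewrite hall andbT.
by case/orP: hmono => hp; [rewrite (subseq_pairwise ss2 hp) | rewrite (subseq_pairwise ss2 hp) orbT].
Qed.

Section Main.
Variables (R : realType) (d h : nat) (Hs : 'I_h -> halfspace R d) (S : {fset 'rV[R]_d}).
Local Notation V := 'rV[R]_d.

Definition fv (i : 'I_h) (x : V) : R := dotp (hs_normal (Hs i)) x.
Definition gi (x : V) : nat := index x (enum_fset S).
Definition lep (i : 'I_h) : rel V := fun x y =>
  (fv i x < fv i y) || ((fv i x == fv i y) && (gi x <= gi y)%N).

Lemma lep_refl i x : lep i x x.
Proof. by rewrite /lep eqxx leqnn orbT. Qed.

Lemma lep_tot i x y : lep i x y || lep i y x.
Proof.
rewrite /lep; case: ltrgtP => //= _; exact: leq_total.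
Qed.

Lemma lep_trans i x y z : lep i x y -> lep i y z -> lep i x z.
Proof.
rewrite /lep => /orP[lxy|/andP[/eqP exy gxy]] /orP[lyz|/andP[/eqP eyz gyz]].
- by rewrite (lt_trans lxy lyz).
- by rewrite -eyz lxy.
- by rewrite exy lyz.
- by rewrite exy eyz eqxx (leq_trans gxy gyz) orbT.
Qed.

Lemma lep_fv i x y : lep i x y -> fv i x <= fv i y.
Proof. by move=> /orP[/ltW|/andP[/eqP -> _]]. Qed.

Lemma lep_anti i x y : x \in S -> y \in S -> lep i x y -> lep i y x -> x = y.
Proof.
move=> xS yS /orP[lxy|/andP[/eqP exy gxy]] /orP[lyx|/andP[/eqP eyx gyx]].
- by move: (lt_trans lxy lyx); rewrite ltxx.
- by move: lxy; rewrite eyx ltxx.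
- by move: lyx; rewrite exy ltxx.
- apply: (index_inj x xS yS); apply/eqP; rewrite /gi in gxy gyx; by rewrite eqn_leq gxy gyx.
Qed.

Lemma dotpB (a x v : V) : dotp a (x - v) = dotp a x - dotp a v.
Proof. rewrite /dotp -sumrB; apply: eq_bigr => j _; by rewrite !mxE mulrBr. Qed.

Lemma translate_down i v x z :
  in_translate (Hs i) v x -> fv i z <= fv i x -> in_translate (Hs i) v z.
Proof.
rewrite /in_translate /in_halfspace /fv !dotpB => + hzx.
have hle : dotp (hs_normal (Hs i)) z - dotp (hs_normal (Hs i)) v <=
   dotp (hs_normal (Hs i)) x - dotp (hs_normal (Hs i)) v by rewrite lerD2r.
case: hs_open => h1; [exact: le_lt_trans hle h1 | exact: le_trans hle h1].
Qed.

Definition Xr (r : seq ('I_h * V)) : {fset V} := [fset x in S | in_region Hs r x].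
Definition U (T : {fset V}) : {fset V} :=
  [fset z in S | [forall i : 'I_h, has (lep i z) T]].

Lemma Xr_sub r : Xr r `<=` S.
Proof. by apply/fsubsetP => x; rewrite inE => /andP[]. Qed.

Lemma U_sub_region r T : T `<=` Xr r -> U T `<=` Xr r.
Proof.
move=> /fsubsetP TX; apply/fsubsetP => z; rewrite !inE => /andP[zS /forallP hz].
rewrite zS /=; apply/allP => p pr.
have /hasP[x xT lzx] := hz p.1.
have := TX x xT; rewrite inE => /andP[_ /allP xr].
have := xr p pr; rewrite /= => xp. exact: (translate_down xp (lep_fv lzx)).
Qed.

Lemma U_self T : T `<=` S -> T `<=` U T.
Proof.
move=> /fsubsetP TS; apply/fsubsetP => x xT; rewrite inE; apply/andP; split; first exact: TS.
by apply/forallP => i; apply/hasP; exists x => //; exact: lep_refl.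
Qed.

Lemma U_mono T' T : T' `<=` U T -> U T' `<=` U T.
Proof.
move=> /fsubsetP TU; apply/fsubsetP => z; rewrite !inE => /andP[zS /forallP hz].
rewrite zS /=; apply/forallP => i.
have /hasP[x xT' lzx] := hz i.
have := TU x xT'; rewrite inE => /andP[_ /forallP/(_ i)/hasP[y yT lxy]].
by apply/hasP; exists y => //; exact: lep_trans lzx lxy.
Qed.


Variable t : nat.

Definition Fs : seq {fset V} :=
  [seq U T | T <- enum_fset (fpowerset S) & #|` T| == t].

Lemma FsP Y : Y \in Fs -> exists T, [/\ T `<=` S, #|` T| = t & Y = U T].
Proof.
case/mapP => T; rewrite mem_filter => /andP[/eqP tT TP] ->.
by exists T; split=> //; rewrite -fpowersetE.
Qed.

Lemma FsI T : T `<=` S -> #|` T| = t -> U T \in Fs.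
Proof.
move=> TS tT; apply: map_f; rewrite mem_filter tT eqxx /=.
by have : T \in fpowerset S by rewrite fpowersetE.
Qed.

Fixpoint htf (n : nat) (Y : {fset V}) : nat :=
  if n is n'.+1 then (\max_(Z <- Fs | Z `<` Y) htf n' Z)%N.+1 else 0%N.

Definition ht Y := htf (#|` Y|).+1 Y.

Lemma htf_fuel n : forall m Y, (#|` Y| < n)%N -> (#|` Y| < m)%N -> htf n Y = htf m Y.
Proof.
elim: n => [|n IH] [|m] Y //= hn hm; congr (_.+1); apply: eq_bigr => Z ZY.
by apply: IH; apply: leq_trans (fproper_ltn_card ZY) _; rewrite -ltnS.
Qed.

Lemma htE Y : ht Y = (\max_(Z <- Fs | Z `<` Y) ht Z)%N.+1.
Proof.
rewrite {1}/ht [LHS]/=; congr (_.+1); apply: eq_bigr => Z ZY.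
by apply: htf_fuel => //; apply: leq_trans (fproper_ltn_card ZY) _.
Qed.

Lemma ht_lt Z Y : Z \in Fs -> Z `<` Y -> (ht Z < ht Y)%N.
Proof. by move=> ZF ZY; rewrite (htE Y) ltnS; exact: leq_bigmax_seq. Qed.

Lemma ht_pos Y : (0 < ht Y)%N.
Proof. by rewrite htE. Qed.

Lemma bigmax_wit (s : seq {fset V}) (P : pred {fset V}) (F : {fset V} -> nat) m :
  (\max_(i <- s | P i) F i)%N = m.+1 -> exists2 i, i \in s & P i && (F i == m.+1).
Proof.
elim: s => [|x s IH]; first by rewrite big_nil.
rewrite big_cons; case: ifP => Px.
- case: (leqP (F x) (\max_(i <- s | P i) F i)%N) => hx.
  + move=> /IH [i iS hi]; exists i => //; by rewrite inE iS orbT.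
  + move=> hF; exists x; by rewrite ?mem_head ?Px ?hF //=.
- move=> /IH [i iS hi]; exists i => //; by rewrite inE iS orbT.
Qed.

Lemma descent n : forall Y, Y \in Fs -> ht Y = n -> forall c, (0 < c)%N -> (c <= n)%N ->
  exists2 Z, Z \in Fs & (Z `<=` Y) && (ht Z == c).
Proof.
elim: n => [|n IH] Y YF hY c c0 cn; first by move: (leq_trans c0 cn).
case: (eqVneq c n.+1) => [->|cne].
  by exists Y => //; rewrite fsubset_refl hY eqxx.
have cn' : (c <= n)%N by move: cn; rewrite leq_eqVlt (negbTE cne) ltnS.
case: n IH hY cn' {cn cne} => [|n] IH hY cn'; first by move: (leq_trans c0 cn').
move: hY; rewrite htE => /eq_add_S /bigmax_wit [Z ZF /andP[ZY /eqP hZ]].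
have [Z' Z'F /andP[Z'Z hZ']] := IH Z ZF hZ c c0 cn'.
exists Z' => //; rewrite hZ' andbT; apply: fsubset_trans Z'Z (fproper_sub ZY).
Qed.

Lemma chain r (t1 : (1 < t)%N) k (k0 : (0 < k)%N) (i0 : 'I_h) (a : seq V) :
  uniq a -> {subset a <= Xr r} -> pairwise (lep i0) a ->
  (forall i, pairwise (lep i) a || pairwise (fun x y => lep i y x) a) ->
  (t + k <= size a)%N ->
  exists2 Y, Y \in Fs & (Y `<=` Xr r) && (k <= ht Y)%N.
Proof.
move=> ua aX p0 mono ha.
pose x0 : V := 0.
pose top s := nth x0 a (t.-1 + s).
pose Ts s : {fset V} := [fset x in rcons (take t.-1 a) (top s)].
have memTs : forall s z, z \in Ts s -> exists j, [/\ (j <= t.-1 + s)%N, z = nth x0 a j &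
    ((j < t.-1)%N \/ j = (t.-1 + s)%N)].
  move=> s z; rewrite inE mem_rcons in_cons => /orP[/eqP ->|].
    by exists (t.-1 + s)%N; split=> //; right.
  case/(nthP x0) => j; rewrite size_take_min => jlt <-.
  have jt : (j < t.-1)%N by move: jlt; rewrite leq_min => /andP[].
  exists j; split; [by apply: leq_trans (ltnW jt) (leq_addr _ _)|by rewrite nth_take|by left].
have subX : forall s, (t.-1 + s < size a)%N -> Ts s `<=` Xr r.
  move=> s hs; apply/fsubsetP => z /memTs [j [jle -> _]]; apply: aX; apply: mem_nth.
  exact: leq_ltn_trans jle hs.
have subS : forall s, (t.-1 + s < size a)%N -> Ts s `<=` S.
  by move=> s hs; apply: fsubset_trans (subX s hs) (Xr_sub r).
have cardTs : forall s, (t.-1 + s < size a)%N -> #|` Ts s| = t.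
  move=> s hs; rewrite card_fseq undup_id ?size_rcons ?size_takel ?prednK //.
  - by apply: ltnW; apply: leq_trans t1.
  - by apply: leq_trans (leq_addr s _) (ltnW hs).
  rewrite rcons_uniq take_uniq // andbT; apply/negP.
  case/(nthP x0) => j; rewrite size_take_min leq_min => /andP[jt _].
  rewrite (nth_take _ jt) => /eqP; rewrite nth_uniq //.
  + by move=> /eqP ejs; move: jt; rewrite ejs -{2}(addn0 t.-1) ltn_add2l.
  + by apply: leq_ltn_trans (leq_trans (ltnW jt) (leq_addr s _)) hs.
have in0 : forall s, (t.-1 + s < size a)%N -> nth x0 a 0 \in Ts s.
  move=> s hs; rewrite inE mem_rcons in_cons; apply/orP; right.
  have t0 : (0 < t.-1)%N by rewrite -ltnS prednK // ltnW.
  rewrite -(nth_take _ t0); apply: mem_nth; rewrite size_takel //.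
  by apply: leq_trans (leq_addr s _) (ltnW hs).
have intop : forall s, top s \in Ts s.
  by move=> s; rewrite inE mem_rcons mem_head.
have step : forall s, (t.-1 + s.+1 < size a)%N -> U (Ts s) `<` U (Ts s.+1).
  move=> s hs; have hs0 : (t.-1 + s < size a)%N by apply: leq_ltn_trans _ hs; rewrite leq_add2l.
  rewrite fproperE; apply/andP; split.
    apply: U_mono; apply/fsubsetP => z zT.
    have zS : z \in S by apply: (fsubsetP (subS s hs0)).
    have [j [jle ez _]] := memTs s z zT.
    have js : (j < size a)%N by apply: leq_ltn_trans jle hs0.
    rewrite inE; apply/andP; split => //; apply/forallP => i.
    case/orP: (mono i) => hp.
      apply/hasP; exists (top s.+1); first exact: intop.
      by rewrite ez; apply: (pairwiseP x0 hp) => //; rewrite addnS ltnS.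
    apply/hasP; exists (nth x0 a 0); first exact: in0.
    case: j jle ez js => [|j] jle -> js; first exact: lep_refl.
    by apply: (pairwiseP x0 hp) => //; apply: leq_ltn_trans _ js.
  apply/negP => H.
  have topS : top s.+1 \in S by apply: (fsubsetP (subS s.+1 hs)).
  have : top s.+1 \in U (Ts s).
    by apply: (fsubsetP H); apply: (fsubsetP (U_self (subS s.+1 hs))).
  rewrite inE => /andP[_ /forallP/(_ i0)/hasP[x xT lx]].
  have [j [jle ex _]] := memTs s x xT.
  have js : (j < size a)%N by apply: leq_ltn_trans jle hs0.
  have xS : x \in S by apply: (fsubsetP (subS s hs0)).
  have lx' : lep i0 x (top s.+1).
    by rewrite ex; apply: (pairwiseP x0 p0) => //; rewrite addnS ltnS.
  have := lep_anti xS topS lx' lx; rewrite ex /top => /eqP; rewrite nth_uniq //.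
  by move=> /eqP ej; move: jle; rewrite ej addnS ltnn.
have hts : forall s, (t.-1 + s < size a)%N -> (s.+1 <= ht (U (Ts s)))%N.
  elim=> [|s IH] hs; first exact: ht_pos.
  have hs0 : (t.-1 + s < size a)%N by apply: leq_ltn_trans _ hs; rewrite leq_add2l.
  apply: leq_ltn_trans (IH hs0) _; apply: ht_lt; last exact: step.
  exact: FsI (subS s hs0) (cardTs s hs0).
have hk : (t.-1 + k.-1 < size a)%N by lia.
exists (U (Ts k.-1)); first exact: FsI (subS _ hk) (cardTs _ hk).
rewrite U_sub_region ?subX //=.
by have := hts _ hk; rewrite prednK.
Qed.

End Main.

Unset Implicit Arguments.

Theorem theorem4 :
  forall t k h : nat, (2 <= t)%N -> (1 <= k)%N -> (1 <= h)%N ->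
  exists m : nat,
    forall (R : realType) (d : nat) (Hs : 'I_h -> halfspace R d) (S : {fset 'rV[R]_d}),
    exists col : {fset 'rV[R]_d} -> 'I_k,
      forall r : seq ('I_h * 'rV[R]_d),
        (m <= #|` [fset x in S | in_region Hs r x]|)%N ->
        forall c : 'I_k,
          exists T : {fset 'rV[R]_d},
            [/\ is_tuple_of t S T, {in T, forall x, in_region Hs r x} & col T = c].
Proof.
move=> t k h t2 k1 h1.
exists (iter h (fun M => 2 ^ (M + M))%N (t + k)%N).
move=> R d Hs S.
case: k k1 => [//|k'] _.
exists (fun T => Ordinal (ltn_pmod (ht Hs S t (U Hs S T)) (ltn0Sn k'))).
move=> r hr c.
pose i0 : 'I_h := Ordinal h1.
have hs : (iter (size (enum 'I_h)) (fun M => 2 ^ (M + M))%N (t + k'.+1)%N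
     <= size (enum_fset (Xr Hs S r)))%N by rewrite size_enum_ord.
have [s' [ss' [hsz hall]]] := es_all (lep_tot Hs S) hs.
have mono : forall i, pairwise (lep Hs S i) s' || pairwise (fun x y => lep Hs S i y x) s'.
  by move=> i; apply: (allP hall); rewrite mem_enum.
have us' : uniq s' by apply: subseq_uniq ss' (fset_uniq _).
have sX : {subset s' <= Xr Hs S r} by move=> x /(mem_subseq ss').
have [Y YF /andP[YX hY]] : exists2 Y, Y \in Fs Hs S t & (Y `<=` Xr Hs S r) && (k'.+1 <= ht Hs S t Y)%N.
  have [p0|p0] := boolP (pairwise (lep Hs S i0) s').
    by case: (chain t2 (ltn0Sn k') us' sX p0 mono hsz) => Y1 H1 H2; exists Y1.
  have mono' : forall i, pairwise (lep Hs S i) (rev s') || pairwise (fun x y => lep Hs S i y x) (rev s').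
    by move=> i; rewrite !pairwise_rev orbC; apply: mono.
  have p0' : pairwise (lep Hs S i0) (rev s').
    by rewrite pairwise_rev; move: (mono i0); rewrite (negbTE p0).
  have us'' : uniq (rev s') by rewrite rev_uniq.
  have sX' : {subset rev s' <= Xr Hs S r} by move=> x; rewrite mem_rev; apply: sX.
  have hsz' : (t + k'.+1 <= size (rev s'))%N by rewrite size_rev.
  by case: (chain t2 (ltn0Sn k') us'' sX' p0' mono' hsz') => Y1 H1 H2; exists Y1.
pose c' := if val c == 0%N then k'.+1 else val c.
have c'0 : (0 < c')%N by rewrite /c'; case: eqP => // /eqP; rewrite lt0n.
have c'k : (c' <= ht Hs S t Y)%N.
  apply: leq_trans hY; rewrite /c'; case: eqP => // _; exact: ltnW (ltn_ord c).
have [Z ZF /andP[ZY /eqP hZ]] := descent YF (erefl _) c'0 c'k.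
have [T [TS tT ZT]] := FsP ZF.
have TX : T `<=` Xr Hs S r.
  have hT := U_self Hs TS; rewrite -ZT in hT; exact: fsubset_trans hT (fsubset_trans ZY YX).
exists T; split.
- by rewrite /is_tuple_of TS tT eqxx.
- by move=> x /(fsubsetP TX); rewrite inE => /andP[].
- apply: val_inj => /=; rewrite -ZT hZ /c'; case: eqP => [->|_]; first exact: modnn.
  by rewrite modn_small //; exact: ltn_ord.
Qed.
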